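(* The short exact sequence $1\to\mathrm{Sym}(\{0,1\}^* )\to QT\xrightarrow{\pi} T\to 1$ does not split, i.e. there is no homomorphism $j:T\to QT$ with $\pi\circ j=\mathrm{id}_T$.
   Context: Let $\{0,1\}^*$ be the finite words over $\{0,1\}$, the vertices of the rooted binary tree in which $x$ has children $x0$ and $x1$ (two edge colours). $QV$ is the group of bijections $\tau$ of $\{0,1\}^*$ with $\tau(x0)=\tau(x)0$ and $\tau(x1)=\tau(x)1$ for all but finitely many $x$. Each such $\tau$ induces a homeomorphism $\pi(\tau)$ of $\{0,1\}^{\mathbb N}$ by $\pi(\tau)(\ell\omega)=\tau(\ell)\omega$, for $\ell$ in a finite maximal prefix-antichain $L$ with $\tau(\ell s)=\tau(\ell)s$ for all $\ell\in L$ and words $s$; this gives a surjective homomorphism $\pi:QV\to V$ onto Thompson's group $V$ with kernel $\mathrm{Sym}(\{0,1\}^* )$, the finitely supported permutations of $\{0,1\}^*$. Thompson's group $T\le V$ consists of the elements preserving the cyclic lexicographic order of $\{0,1\}^{\mathbb N}$; $QT=\pi^{-1}(T)$ and $\pi$ also denotes its restriction to $QT$. *)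

(* Defs.v *)
From mathcomp Require Import all_boot.
Set Implicit Arguments. Unset Strict Implicit. Unset Printing Implicit Defensive.

(** Finite words over {0,1}: [seq bool] (false = 0, true = 1).
    Vertices of the rooted binary tree; children of x are rcons x false/true. *)
Definition word := seq bool.

Definition stream := nat -> bool.

Definition prepend (w : word) (om : stream) : stream :=
  fun n => if n < size w then nth false w n else om (n - size w).

Definition inQV (tau : word -> word) : Prop :=
  bijective tau /\
  exists S : seq word, forall x : word, x \notin S ->
    forall b : bool, tau (rcons x b) = rcons (tau x) b.

Definition max_prefix_antichain (L : seq word) : Prop :=
  (forall l l', l \in L -> l' \in L -> prefix l l' -> l = l') /\
  (forall x : word, exists2 l, l \in L & prefix l x || prefix x l).

Definition is_pi (tau : word -> word) (f : stream -> stream) : Prop :=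
  exists L : seq word, max_prefix_antichain L /\
    (forall l, l \in L -> forall s : word, tau (l ++ s) = tau l ++ s) /\
    (forall l, l \in L -> forall om : stream, f (prepend l om) = prepend (tau l) om).

Definition inV (f : stream -> stream) : Prop :=
  exists tau, inQV tau /\ is_pi tau f.

Definition lex_lt (a b : stream) : Prop :=
  exists n, (forall i, i < n -> a i = b i) /\ a n = false /\ b n = true.

Definition cyc (a b c : stream) : Prop :=
  (lex_lt a b /\ lex_lt b c) \/ (lex_lt b c /\ lex_lt c a) \/
  (lex_lt c a /\ lex_lt a b).

Definition inT (f : stream -> stream) : Prop :=
  inV f /\ forall a b c, cyc a b c -> cyc (f a) (f b) (f c).

Definition inQT (tau : word -> word) : Prop :=
  exists f, inT f /\ inQV tau /\ is_pi tau f.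

Definition splitting (j : (stream -> stream) -> (word -> word)) : Prop :=
  (forall t, inT t -> inQT (j t) /\ is_pi (j t) t) /\
  (forall t u v, inT t -> inT u -> inT v ->
     (forall om, v om = t (u om)) ->
     forall x, j v x = j t (j u x)).

(* Main.v *)
From Stdlib Require Import FunctionalExtensionality Lia.
Require Import Defs.
From mathcomp Require Import all_boot zify.
Set Implicit Arguments. Unset Strict Implicit. Unset Printing Implicit Defensive.


Definition incb (k : nat) (f : nat -> bool) (n : nat) : bool :=
  if n < k then f n (+) all f (iota n.+1 (k - n.+1)) else f n.
Definition inc (k : nat) (om : stream) : stream := incb k om.
Fixpoint bv (k : nat) (f : nat -> bool) : nat :=
  if k is k'.+1 then (bv k' f).*2 + f k' else 0.

Lemma bv_ext k f g : (forall m, m < k -> f m = g m) -> bv k f = bv k g.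
Proof.
elim: k => [//|k IH] H /=; rewrite IH ?H // => m Hm; apply: H; exact: ltnW.
Qed.

Lemma bv_lt k f : bv k f < 2 ^ k.
Proof.
elim: k => [//|k IH] /=; rewrite expnS.
case: (f k) => /=; rewrite -muln2; lia.
Qed.

Lemma bv_inj k f g : bv k f = bv k g -> forall m, m < k -> f m = g m.
Proof.
elim: k => [//|k IH] /= H m.
have Hk : f k = g k.
  move: H; rewrite -!muln2; case: (f k); case: (g k) => //=; lia.
have Hb : bv k f = bv k g by move: H; rewrite Hk -!muln2; lia.
rewrite ltnS leq_eqVlt => /orP [/eqP -> //|]; exact: IH.
Qed.

Lemma incb_high k f m : k <= m -> incb k f m = f m.
Proof. by rewrite /incb leqNgt => /negbTE ->. Qed.

Lemma incb_ext k f g n : (forall m, m < k -> f m = g m) -> f n = g n ->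
  incb k f n = incb k g n.
Proof.
move=> H Hn; rewrite /incb; case: ifP => // nk; rewrite Hn; congr (_ (+) _).
apply: eq_in_all => m; rewrite mem_iota => /andP [_ Hm]; apply: H; lia.
Qed.

Lemma incbS_low k f m : m < k ->
  incb k.+1 f m = if f k then incb k f m else f m.
Proof.
move=> mk; rewrite /incb ltnS (ltnW mk) mk.
have -> : k.+1 - m.+1 = (k - m.+1) + 1 by lia.
rewrite iotaD all_cat /=; have -> : m.+1 + (k - m.+1) = k by lia.
by case: (f k); rewrite ?andbT ?andbF ?addbF.
Qed.

Lemma incbS_top k f : incb k.+1 f k = ~~ f k.
Proof. by rewrite /incb ltnSn subnn /= addbT. Qed.

Lemma bv_inc k f : bv k (incb k f) = (bv k f).+1 %% 2 ^ k.
Proof.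
elim: k f => [|k IH] f /=; first by rewrite modn1.
rewrite incbS_top.
have Hl := bv_lt k f.
case Efk: (f k) => /=.
  rewrite (@bv_ext k _ (incb k f)); last by move=> m mk; rewrite incbS_low // Efk.
  rewrite IH expnS.
  have [Heq|Hne] := eqVneq (bv k f).+1 (2 ^ k).
    rewrite Heq modnn -!muln2 addn0 mul0n.
    have -> : (bv k f * 2 + 1).+1 = 2 ^ k * 2 by rewrite -Heq; lia.
    by rewrite mulnC modnn.
  have Hlt : (bv k f).+1 < 2 ^ k by rewrite ltn_neqAle Hne.
  rewrite modn_small // modn_small -!muln2; lia.
rewrite (@bv_ext k _ f); last by move=> m mk; rewrite incbS_low // Efk.
rewrite expnS modn_small -!muln2; lia.
Qed.


Lemma bvS k f : bv k.+1 f = (bv k f).*2 + f k. Proof. by []. Qed.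

Lemma lex_irr a : ~ lex_lt a a.
Proof. by case=> n [_ [-> ]]. Qed.

Lemma lex_trans a b c : lex_lt a b -> lex_lt b c -> lex_lt a c.
Proof.
case=> n [Hn [an bn]] [m [Hm [bm cm]]].
have [nm|mn|nm] := ltngtP n m.
- exists n; split; last by rewrite an -(Hm _ nm).
  move=> i ilt; rewrite Hn // Hm //; lia.
- exists m; split; last by rewrite (Hn _ mn).
  move=> i ilt; rewrite Hn ?Hm //; lia.
- by move: bm; rewrite -nm bn.
Qed.

Lemma lex_asym a b : lex_lt a b -> lex_lt b a -> False.
Proof. move=> H1 H2; exact: (lex_irr (lex_trans H1 H2)). Qed.

Lemma bv_lt_lex k a b : bv k a < bv k b -> lex_lt a b.
Proof.
elim: k => [//|k IH] /=.
have Ha := bv_lt k a; have Hb := bv_lt k b.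
have [H|H|H] := ltngtP (bv k a) (bv k b).
- by move=> _; apply: IH.
- rewrite -!muln2 => H'; exfalso; move: H'; case: (a k); case: (b k) => /=; lia.
- rewrite H; case Ea: (a k); case Eb: (b k) => /=; rewrite ?ltnn -?muln2; try lia.
  move=> _; exists k; split => //; exact: bv_inj H.
Qed.

Lemma bv_pre_lt n a b : (forall i, i < n -> a i = b i) -> a n = false -> b n = true ->
  forall j, bv (n.+1 + j) a < bv (n.+1 + j) b.
Proof.
move=> Hn an bn; elim=> [|j IH].
  rewrite addn0 /= an bn (bv_ext (g := b) Hn); lia.
rewrite addnS (bvS (n.+1 + j) a) (bvS (n.+1 + j) b) -!muln2; have := leq_b1 (a (n.+1 + j)); have := leq_b1 (b (n.+1 + j)); lia.
Qed.

Lemma lex_bv k a b : lex_lt a b -> bv k a < bv k b \/ (forall m, m < k -> a m = b m).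
Proof.
case=> n [Hn [an bn]].
case: (ltnP n k) => nk.
  left; have -> : k = n.+1 + (k - n.+1) by lia.
  exact: bv_pre_lt.
right=> m mk; apply: Hn; lia.
Qed.

Lemma inc_pre k a b : (forall m, m < k -> a m = b m) -> forall m, m < k -> inc k a m = inc k b m.
Proof. move=> H m mk; apply: incb_ext => //; exact: H. Qed.

Lemma lex_inc_same k a b : (forall m, m < k -> a m = b m) -> lex_lt a b ->
  lex_lt (inc k a) (inc k b).
Proof.
move=> H [n [Hn [an bn]]].
have kn : k <= n by rewrite leqNgt; apply/negP => nk; move: (H _ nk); rewrite an bn.
exists n; split; last by rewrite /inc !incb_high.
move=> i ilt; case: (ltnP i k) => ik; first exact: inc_pre.
by rewrite /inc !incb_high // Hn.
Qed.



Ltac sat := repeat match goal with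
  | H : ?A -> ?B, H' : ?A |- _ => specialize (H H')
  end.

Ltac fin_cyc :=
  sat;
  first [ exfalso; match goal with
          | H1 : lex_lt ?x ?y, H2 : lex_lt ?y ?x |- _ => exact: (lex_asym H1 H2) end
        | unfold cyc; first [ left; split; assumption
                            | right; left; split; assumption
                            | right; right; split; assumption ] ].

Lemma cyc_piece (r : stream -> stream) (P : stream -> bool) :
  (forall a b, ~~ P a -> ~~ P b -> lex_lt a b -> lex_lt (r a) (r b)) ->
  (forall a b, P a -> P b -> lex_lt a b -> lex_lt (r a) (r b)) ->
  (forall a b, ~~ P a -> P b -> lex_lt a b) ->
  (forall a b, P a -> ~~ P b -> lex_lt (r a) (r b)) ->
  forall a b c, cyc a b c -> cyc (r a) (r b) (r c).
Proof.
move=> H1 H2 H3 H4 a b c Hc.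
case Pa: (P a); case Pb: (P b); case Pc: (P c);
 move: (H1 a b) (H1 b c) (H1 c a) (H1 b a) (H1 c b) (H1 a c)
       (H2 a b) (H2 b c) (H2 c a) (H2 b a) (H2 c b) (H2 a c)
       (H3 a b) (H3 b c) (H3 c a) (H3 b a) (H3 c b) (H3 a c)
       (H4 a b) (H4 b c) (H4 c a) (H4 b a) (H4 c b) (H4 a c);
 rewrite ?Pa ?Pb ?Pc /= => ? ? ? ? ? ? ? ? ? ? ? ? ? ? ? ? ? ? ? ? ? ? ? ?;
 have Tt : is_true true := isT; sat; case: Hc => [[? ?]|[[? ?]|[? ?]]]; fin_cyc.
Qed.

Lemma cyc_inc k a b c : cyc a b c -> cyc (inc k a) (inc k b) (inc k c).
Proof.
have Hl := @bv_lt k.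
have bvi : forall x, bv k (inc k x) = (bv k x).+1 %% 2 ^ k by move=> x; exact: bv_inc.
apply: (@cyc_piece _ (fun x => bv k x == (2 ^ k).-1)).
- move=> x y Px Py Hxy; case: (lex_bv k Hxy) => [Hv|Hp]; last exact: lex_inc_same.
  apply: (bv_lt_lex (k := k)); rewrite !bvi !modn_small.
  + by [].
  + have := Hl y; move: Py => /eqP; lia.
  + have := Hl x; move: Px => /eqP; lia.
- move=> x y /eqP Px /eqP Py Hxy; case: (lex_bv k Hxy) => [Hv|Hp]; last exact: lex_inc_same.
  by move: Hv; rewrite Px Py ltnn.
- move=> x y Px /eqP Py; apply: (bv_lt_lex (k := k)); have := Hl x; move: Px => /eqP; lia.
- move=> x y /eqP Px Py; apply: (bv_lt_lex (k := k)); rewrite !bvi.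
  have Hp : 0 < 2 ^ k by rewrite expn_gt0.
  have -> : (bv k x).+1 = 2 ^ k by lia.
  rewrite modnn modn_small //; have := Hl y; move: Py => /eqP; lia.
Qed.


Definition rotw k (x : word) : word := mkseq (incb k (nth false x)) (size x).
Definition tauk k (x : word) : word := if k <= size x then rotw k x else x.

Lemma size_rotw k x : size (rotw k x) = size x.
Proof. by rewrite /rotw size_mkseq. Qed.

Lemma size_tauk k x : size (tauk k x) = size x.
Proof. by rewrite /tauk; case: ifP; rewrite ?size_rotw. Qed.

Lemma nth_rotw k x n : n < size x -> nth false (rotw k x) n = incb k (nth false x) n.
Proof. by move=> nx; rewrite /rotw nth_mkseq. Qed.

Lemma prepend_nth x om n : n < size x -> prepend x om n = nth false x n.
Proof. by rewrite /prepend => ->. Qed.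

Lemma prepend_rotw k x om : k <= size x -> inc k (prepend x om) = prepend (rotw k x) om.
Proof.
move=> kx; apply: functional_extensionality => n.
rewrite /inc /prepend size_rotw; case: ifP => nx.
  rewrite nth_rotw //; apply: incb_ext => [m mk|]; last by rewrite nx.
  by have -> : m < size x by lia.
rewrite incb_high ?nx //; lia.
Qed.

Lemma prepend_tauk k x om : k <= size x -> inc k (prepend x om) = prepend (tauk k x) om.
Proof. by move=> kx; rewrite /tauk kx prepend_rotw. Qed.

Lemma rotw_cat k l s : k <= size l -> rotw k (l ++ s) = rotw k l ++ s.
Proof.
move=> kl; apply: (@eq_from_nth _ false); first by rewrite size_cat !size_rotw size_cat.
move=> n; rewrite size_rotw => ns; rewrite nth_rotw // nth_cat size_rotw.
case: ifP => nl.
  rewrite nth_rotw //; apply: incb_ext => [m mk|]; last by rewrite nth_cat nl.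
  by rewrite nth_cat; have -> : m < size l by lia.
by rewrite incb_high ?nth_cat ?nl //; lia.
Qed.

Lemma tauk_cat k l s : k <= size l -> tauk k (l ++ s) = tauk k l ++ s.
Proof.
move=> kl; rewrite /tauk size_cat kl; have -> : k <= size l + size s by lia.
exact: rotw_cat.
Qed.

Lemma tauk_rcons k x b : k <= size x -> tauk k (rcons x b) = rcons (tauk k x) b.
Proof. by move=> kx; rewrite -!cats1 tauk_cat. Qed.

Lemma prepend_cat a b om : prepend (a ++ b) om = prepend a (prepend b om).
Proof.
apply: functional_extensionality => n; rewrite /prepend size_cat nth_cat.
case: ifP => nab; case: ifP => na //.
- by have -> : n - size a < size b by lia.
- exfalso; lia.
- have -> : n - size a < size b = false by lia.
  congr om; lia.
Qed.

Lemma prepend_inj_size a b om : size a = size b -> prepend a om = prepend b om -> a = b.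
Proof.
move=> Hs He; apply: (@eq_from_nth _ false) => // n na.
by rewrite -(prepend_nth om na) He prepend_nth // -Hs.
Qed.

Lemma prepend_inj a b : (forall om, prepend a om = prepend b om) -> a = b.
Proof.
move=> H.
suff Hs : size a = size b by exact: (prepend_inj_size (om := fun _ => false)).
have key : forall a b, (forall om, prepend a om = prepend b om) -> size a < size b -> False.
  move=> a' b' H' ab.
  pose om := fun _ : nat => ~~ nth false b' (size a').
  have := congr1 (fun f => f (size a')) (H' om).
  rewrite /prepend ltnn ab subnn /om; by case: (nth _ _ _).
case: (ltngtP (size a) (size b)) => // ab; exfalso.
  exact: (key a b).
by apply: (key b a) => // om; rewrite H.
Qed.


Lemma bv_iter k i om : bv k (iter i (inc k) om) = (bv k om + i) %% 2 ^ k.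
Proof.
elim: i => [|i IH]; first by rewrite addn0 modn_small // bv_lt.
rewrite iterS /inc -/(inc k _) bv_inc IH -addn1 modnDml addn1 addnS. by [].
Qed.

Lemma iter_high k i om m : k <= m -> iter i (inc k) om m = om m.
Proof. by move=> km; elim: i => [//|i IH]; rewrite iterS /inc incb_high. Qed.

Lemma rT_full k : iter (2 ^ k) (inc k) = (fun x => x).
Proof.
apply: functional_extensionality => om; apply: functional_extensionality => n.
case: (ltnP n k) => nk; last exact: iter_high.
apply: (bv_inj (k := k)) => //.
by rewrite bv_iter -modnDmr modnn addn0 modn_small // bv_lt.
Qed.

Lemma bv_head k f : bv k.+1 f = f 0 * 2 ^ k + bv k (fun m => f m.+1).
Proof.
elim: k => [|k IH]; first by rewrite /= expn0; case: (f 0).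
rewrite bvS IH bvS expnS -!muln2; lia.
Qed.

Lemma rT_half K : iter (2 ^ K) (inc K.+1) = inc 1.
Proof.
apply: functional_extensionality => om; apply: functional_extensionality => n.
case: (ltnP n K.+1) => nk; last by rewrite iter_high // /inc incb_high //; lia.
apply: (bv_inj (k := K.+1)) => //.
rewrite bv_iter !bv_head.
have -> : bv K (fun m => inc 1 om m.+1) = bv K (fun m => om m.+1).
  by apply: bv_ext => m _; rewrite /inc incb_high.
have -> : inc 1 om 0 = ~~ om 0 by rewrite /inc /incb /= addbT.
have Hl := bv_lt K (fun m => om m.+1).
rewrite expnS.
case: (om 0) => /=.
  rewrite mul1n mul0n add0n.
  have -> : 2 ^ K + bv K (fun m => om m.+1) + 2 ^ K = bv K (fun m => om m.+1) + 2 * 2 ^ K by lia.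
  by rewrite modnDr modn_small //; lia.
rewrite mul0n mul1n add0n modn_small; lia.
Qed.


Fixpoint ws (M : nat) : seq word :=
  if M is M'.+1 then [::] :: (map (cons false) (ws M') ++ map (cons true) (ws M')) else [::].

Lemma mem_ws M x : (x \in ws M) = (size x < M).
Proof.
have inj : forall b : bool, injective (cons b) by move=> b ? ? [].
elim: M x => [|M IH] [|b w] //=.
rewrite in_cons /= mem_cat ltnS -IH.
case: b; rewrite (mem_map (inj _)).
  have -> : (true :: w \in map (cons false) (ws M)) = false.
    by apply/negP => /mapP [y _].
  by [].
have -> : (false :: w \in map (cons true) (ws M)) = false.
  by apply/negP => /mapP [y _].
by rewrite orbF.
Qed.

Lemma size_ws M : (size (ws M)).+1 = 2 ^ M.
Proof. elim: M => [//|M IH] /=; rewrite size_cat !size_map expnS -IH; set n := size _; rewrite mulSn mul1n addnS addSn. by []. Qed.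

Lemma uniq_ws M : uniq (ws M).
Proof.
elim: M => [//|M IH] /=; rewrite mem_cat cat_uniq !map_inj_uniq //.
rewrite IH /=; apply/and3P; split => //.
- by apply/norP; split; apply/negP => /mapP [y _].
- by apply/hasPn => y /mapP [z _ ->]; apply/negP => /mapP [z' _].
all: by move=> ? ? [].
Qed.

Definition allw k := [seq w <- ws k.+1 | size w == k].

Lemma mem_allw k x : (x \in allw k) = (size x == k).
Proof. rewrite mem_filter mem_ws; case: eqP => //= ->; lia. Qed.

Lemma size_iter_tauk k i x : size (iter i (tauk k) x) = size x.
Proof. by elim: i => [//|i IH]; rewrite iterS size_tauk. Qed.

Lemma iter_tauk_prepend k i x om : k <= size x ->
  iter i (inc k) (prepend x om) = prepend (iter i (tauk k) x) om.
Proof.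
move=> kx; elim: i => [//|i IH]; rewrite !iterS IH prepend_tauk //.
by rewrite size_iter_tauk.
Qed.

Lemma tauk_short k x : size x < k -> tauk k x = x.
Proof. by rewrite /tauk ltnNge => /negbTE ->. Qed.

Lemma iter_tauk_full k x : iter (2 ^ k) (tauk k) x = x.
Proof.
case: (ltnP (size x) k) => kx.
  by elim: (2 ^ k) => [//|i IH]; rewrite iterS IH tauk_short.
apply: (prepend_inj_size (om := fun _ => false)); first by rewrite size_iter_tauk.
by rewrite -iter_tauk_prepend // rT_full.
Qed.

Lemma bij_iter (f : word -> word) i : bijective f -> bijective (iter i f).
Proof.
case=> g fg gf; exists (iter i g).
- move=> x; elim: i => [//|i IH]; by rewrite (iterS i f) (iterSr i g) fg.
- move=> x; elim: i => [//|i IH]; by rewrite (iterS i g) (iterSr i f) gf.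
Qed.

Lemma bij_tauk k : bijective (tauk k).
Proof.
exists (iter (2 ^ k).-1 (tauk k)) => x.
  by rewrite -iterSr prednK ?expn_gt0 // iter_tauk_full.
by rewrite -iterS prednK ?expn_gt0 // iter_tauk_full.
Qed.

Lemma iter_tauk_cat k i l s : k <= size l -> iter i (tauk k) (l ++ s) = iter i (tauk k) l ++ s.
Proof.
move=> kl; elim: i => [//|i IH]; rewrite !iterS IH tauk_cat //.
by rewrite size_iter_tauk.
Qed.

Lemma inQV_iter k i : inQV (iter i (tauk k)).
Proof.
split; first exact: bij_iter (bij_tauk k).
exists (ws k) => x; rewrite mem_ws -leqNgt => kx b.
by rewrite -!cats1 iter_tauk_cat.
Qed.

Lemma is_pi_iter k i : is_pi (iter i (tauk k)) (iter i (inc k)).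
Proof.
exists (allw k); split; [split|split].
- move=> l l'; rewrite !mem_allw => /eqP sl /eqP sl' /prefixP [s Es].
  subst l'; move: sl'; rewrite size_cat sl => Hs.
  have : size s = 0 by lia.
  by move/size0nil => ->; rewrite cats0.
- move=> x; case: (leqP k (size x)) => kx.
    exists (take k x); first by rewrite mem_allw size_takel.
    by rewrite prefix_take.
  exists (x ++ nseq (k - size x) false).
    by rewrite mem_allw size_cat size_nseq subnKC // ltnW.
  by rewrite prefix_prefix orbT.
- move=> l; rewrite mem_allw => /eqP sl s; apply: iter_tauk_cat; by rewrite sl.
- move=> l; rewrite mem_allw => /eqP sl om; apply: iter_tauk_prepend; by rewrite sl.
Qed.

Lemma inT_iter k i : inT (iter i (inc k)).
Proof.
split; first by exists (iter i (tauk k)); split; [exact: inQV_iter|exact: is_pi_iter].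
elim: i => [//|i IH] a b c H; rewrite !iterS; apply: cyc_inc; exact: IH.
Qed.


Lemma card_sub_count (B : seq word) (u : uniq B) (p : pred word) :
  #|[pred x : seq_sub B | p (val x)]| = count p B.
Proof.
rewrite cardE -deprecated_filter_index_enum size_filter.
rewrite -[in RHS](val_seq_sub_enum u) count_map.
apply/permP/uniq_perm; first exact: index_enum_uniq.
  exact: undup_uniq.
by move=> x; rewrite mem_index_enum mem_seq_sub_enum.
Qed.

Lemma order_dvd (T : finType) (f : T -> T) (x : T) n : injective f ->
  iter n f x = x -> order f x %| n.
Proof.
move=> injf H.
have o0 := order_gt0 f x.
have Hq : forall q, iter (q * order f x) f x = x.
  by elim=> [//|q IH]; rewrite mulSn iterD IH iter_order.
have Hr : iter (n %% order f x) f x = x.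
  by move: H; rewrite {1}(divn_eq n (order f x)) addnC iterD Hq.
rewrite /dvdn; apply/eqP; move: Hr.
have := ltn_pmod n o0; case: (n %% order f x) => [//|r] Hlt Hr.
have := findex_iter Hlt; rewrite Hr /findex /orbit -orderSpred /= eqxx.
by [].
Qed.

Lemma dvd_iter (T : finType) (f : T -> T) (x : T) n : injective f ->
  order f x %| n -> iter n f x = x.
Proof.
move=> injf /dvdnP [q ->].
by elim: q => [//|q IH]; rewrite mulSn iterD IH iter_order.
Qed.

Lemma count_lemma (B : seq word) (h : word -> word) (K : nat) :
  uniq B -> (forall x, x \in B -> h x \in B) -> injective h ->
  (forall x, iter (2 ^ K.+1) h x = x) ->
  2 ^ K.+1 %| count (fun x => iter (2 ^ K) h x != x) B.
Proof.
move=> uB hB injh hN.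
pose hs (x : seq_sub B) : seq_sub B := SeqSub (hB _ (ssvalP x)).
have hsE : forall n x, val (iter n hs x) = iter n h (val x).
  by move=> n x; elim: n => [//|n IH]; rewrite !iterS /= IH.
have injhs : injective hs.
  by move=> x y E; apply: val_inj; apply: injh; exact: (congr1 val E).
have itE : forall n x, (iter n hs x == x) = (iter n h (val x) == val x).
  by move=> n x; rewrite -val_eqE /= hsE.
pose a := [pred x : seq_sub B | iter (2 ^ K) hs x != x].
rewrite -(card_sub_count uB (fun x => iter (2 ^ K) h x != x)).
have -> : #|[pred x : seq_sub B | iter (2 ^ K) h (val x) != val x]| = #|a|.
  by apply: eq_card => x; rewrite !inE itE.
have Ha : a \subset order_set hs (2 ^ K.+1).
  apply/subsetP => x; rewrite !inE itE => Hx.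
  have Hd : order hs x %| 2 ^ K.+1.
    by apply: order_dvd => //; apply/eqP; rewrite itE hN.
  case/(@dvdn_pfactor 2 _ _ (isT : prime 2)): Hd => m; rewrite leq_eqVlt => /orP [/eqP -> -> //|mK] Em.
  exfalso; move/negP: Hx; apply; rewrite -itE; apply/eqP; apply: dvd_iter => //.
  by rewrite Em dvdn_exp2l.
have Hc : fclosed hs a.
  move=> x y /eqP <-; rewrite /a /=.
  rewrite !inE -[iter _ hs (hs x)]iterSr iterS.
  by rewrite (inj_eq injhs).
have := fcard_order_set injhs Ha Hc => <-.
exact: dvdn_mull.
Qed.


Fixpoint maxsz (L : seq word) : nat :=
  if L is l :: L' then maxn (size l) (maxsz L') else 0.

Lemma maxsz_ge L l : l \in L -> size l <= maxsz L.
Proof.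
elim: L => [//|l' L IH]; rewrite in_cons => /orP [/eqP ->|H] /=.
  exact: leq_maxl.
exact: leq_trans (IH H) (leq_maxr _ _).
Qed.

Lemma pi_long (tau : word -> word) (g : stream -> stream) (tw : word -> word) k :
  is_pi tau g ->
  (forall x, k <= size x -> forall om, g (prepend x om) = prepend (tw x) om) ->
  exists M, forall x, M <= size x -> tau x = tw x.
Proof.
case=> L [[_ Hcov] [Hcat Hpre]] Hg.
exists (maxn k (maxsz L)) => x Mx.
have [l lL Hc] := Hcov x.
have Hl := maxsz_ge lL.
have lx : prefix l x.
  case/orP: Hc => // /prefixP [s Es].
  have Hs : size s = 0.
    have := congr1 size Es; rewrite size_cat => E.
    move: Mx; rewrite geq_max => /andP [_ H2].
    have := leq_trans Hl H2; rewrite E -{2}[size x]addn0 leq_add2l leqn0 => /eqP; exact.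
  by move: Es; rewrite (size0nil Hs) cats0 => ->; exact: prefix_refl.
case/prefixP: lx => s Es; subst x.
apply: prepend_inj => om.
rewrite Hcat // prepend_cat -Hpre // -prepend_cat Hg //.
move: Mx; rewrite geq_max => /andP [H1 _]; exact: H1.
Qed.


Theorem proposition2p10 :
  ~ exists j : (stream -> stream) -> (word -> word), splitting j.
Proof.
case=> j [Hpi Hhom].
have bij t : inT t -> bijective (j t).
  by move=> Ht; case: (Hpi t Ht) => [[f [_ [[Hb _] _]]] _].
have id_T : inT (fun x : stream => x) by exact: (inT_iter 0 0).
have jid : forall x, j (fun x => x) x = x.
  move=> x; have [g jg gj] := bij _ id_T.
  have E := Hhom _ _ _ id_T id_T id_T (fun _ => erefl) x.
  by have := congr1 g E; rewrite !jg => <-.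
have jpow : forall k i x, j (iter i (inc k)) x = iter i (j (inc k)) x.
  move=> k; elim=> [|i IH] x; first exact: jid.
  rewrite iterS -IH.
  exact: (Hhom _ _ _ (inT_iter k 1) (inT_iter k i) (inT_iter k i.+1) (fun _ => erefl)).
set sigma := j (inc 1).
have [M1 HM1] : exists M, forall x, M <= size x -> sigma x = tauk 1 x.
  apply: (pi_long (g := inc 1) (k := 1)); first exact: (proj2 (Hpi _ (inT_iter 1 1))).
  by move=> x Hx om; rewrite prepend_tauk.
set K := M1.+1.
set tau := j (inc K.+1).
have [M2 HM2] : exists M, forall x, M <= size x -> tau x = tauk K.+1 x.
  apply: (pi_long (g := inc K.+1) (k := K.+1)); first exact: (proj2 (Hpi _ (inT_iter K.+1 1))).
  by move=> x Hx om; rewrite prepend_tauk.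
set M := maxn M2 K.+1.
have M2M : M2 <= M by exact: leq_maxl.
have KM : K.+1 <= M by exact: leq_maxr.
have [g tg gt] := bij _ (inT_iter K.+1 1).
have injt : injective tau by exact: can_inj tg.
have full : forall x, iter (2 ^ K.+1) tau x = x.
  by move=> x; rewrite -jpow rT_full jid.
have half : forall x, iter (2 ^ K) tau x = sigma x.
  by move=> x; rewrite -jpow rT_half.
have tauB : forall x, x \in ws M -> tau x \in ws M.
  move=> x; rewrite !mem_ws => Hx; rewrite ltnNge; apply/negP => Hy.
  pose z := iter (2 ^ K.+1).-1 (tauk K.+1) (tau x).
  have Hz : tauk K.+1 z = tau x.
    by rewrite /z -iterS prednK ?expn_gt0 // iter_tauk_full.
  have Hsz : size z = size (tau x) by rewrite size_iter_tauk.
  have : tau z = tau x by rewrite HM2 // Hsz; exact: leq_trans M2M Hy.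
  move/injt => Ezx; move: Hx; rewrite -Ezx Hsz ltnNge Hy //.
have Hdiv := count_lemma (uniq_ws M) tauB injt full.
rewrite (eq_count (a2 := fun x => sigma x != x)) in Hdiv; last by move=> x; rewrite half.
set c := count _ _ in Hdiv.
set e := count (fun x => sigma x == x) (ws M).
have Hce : e + c = (size (ws M)) by rewrite /e /c -(count_predC (fun x => sigma x == x)).
have He : e.+1 <= 2 ^ K.
  rewrite -size_ws ltnS /e -size_filter.
  apply: uniq_leq_size; first exact: filter_uniq (uniq_ws M).
  move=> x; rewrite mem_filter => /andP [/eqP Hx _]; rewrite mem_ws ltnNge.
  apply/negP => Kx.
  have := HM1 x (leq_trans (leqnSn _) Kx); rewrite Hx /tauk.
  have s1 : 1 <= size x by apply: leq_trans Kx.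
  rewrite s1 => E.
  have := congr1 (nth false ^~ 0) E.
  by rewrite /= nth_rotw // /incb /=; case: (nth false x 0).
have Hd2 : 2 ^ K.+1 %| 2 ^ M by rewrite dvdn_exp2l.
have Hd3 : 2 ^ K.+1 %| e.+1.
  have Hsum : e.+1 + c = 2 ^ M by rewrite -size_ws -Hce addSn.
  by move: Hd2; rewrite -Hsum dvdn_addl.
have := dvdn_leq (ltn0Sn _) Hd3; rewrite expnS; move: He.
have := expn_gt0 2 K; lia.
Qed.
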